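(* Let $L$ be a finite set of nests, $\mu>0$, and $\mu_\ell\in(0,\mu]$ for each $\ell\in L$. Let $\sigma_{i\ell}\ge 0$ ($i=1,\dots,n$, $\ell\in L$) satisfy $\sum_{\ell\in L}\sigma_{i\ell}=1$ for each $i$. Define the generalized nested logit generating function \[ G(x)=\sum_{\ell\in L}\left(\sum_{i=1}^n\left(\sigma_{i\ell}\,x^{(i)}\right)^{1/\mu_\ell}\right)^{\mu_\ell/\mu},\qquad x\in\mathbb{R}^n_+, \] and the surplus function $E(u)=\mu\ln G(e^{u})$. Then $E$ is $C$-differentially-consistent with $C=\dfrac{1}{\min_{\ell\in L}\mu_\ell}$, i.e. for all $U\in(-\infty,0)^n$ and all $i=1,\dots,n$, \[ \frac{\partial^2 E(U)}{\partial U^{(i)2}}\le \frac{1}{\min_{\ell\in L}\mu_\ell}\cdot\frac{\partial E(U)}{\partial U^{(i)}}. \]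
   Context: For $u\in\mathbb{R}^n$, $e^{u}$ denotes the componentwise exponential $(e^{u^{(1)}},\dots,e^{u^{(n)}})^T$. $\mathbb{R}^n_+$ is the set of vectors with nonnegative components. A convex function $f$ is called $C$-differentially-consistent (for a constant $C>0$) if $\nabla^2_{ii}f(U)\le C\,\nabla_i f(U)$ for all $U\in(-\infty,0)^n$ and all $i$. *)

(* Defs.v *)
From HB Require Import structures.
From mathcomp Require Import all_boot all_order all_algebra.
From mathcomp Require Import all_classical all_reals all_analysis.
Set Implicit Arguments. Unset Strict Implicit. Unset Printing Implicit Defensive.
Import Order.TTheory GRing.Theory Num.Theory.
Local Open Scope ring_scope.

(* Generalized nested logit generating function
   G(x) = sum_l ( sum_i (sigma_il x_i)^(1/mu_l) )^(mu_l/mu).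
   powR: 0 `^ a = 0 for a <> 0, the usual convention. *)
Definition GNL (R : realType) (n : nat) (L : finType) (mu : R) (mul : L -> R)
  (sigma : 'I_n -> L -> R) (x : 'I_n -> R) : R :=
  \sum_(l : L) (\sum_(i < n) (sigma i l * x i) `^ (mul l)^-1) `^ (mul l / mu).

Definition surplus (R : realType) (n : nat) (L : finType) (mu : R) (mul : L -> R)
  (sigma : 'I_n -> L -> R) (u : 'I_n -> R) : R :=
  mu * ln (GNL mu mul sigma (fun i => expR (u i))).

Definition partial (R : realType) (n : nat) (i : 'I_n) (f : ('I_n -> R) -> R)
  (U : 'I_n -> R) : R :=
  derive1 (fun t : R => f (fun j => U j + (if j == i then t else 0))) 0.

(* min over L of mu_l (the default mu is >= every mu_l, so this is the true
   minimum whenever L is nonempty). *)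
Definition min_mu (R : realType) (L : finType) (mu : R) (mul : L -> R) : R :=
  \big[Num.min/mu]_(l : L) mul l.

(* Main.v *)
Require Import Defs.
From HB Require Import structures.
From mathcomp Require Import all_boot all_order all_algebra.
From mathcomp Require Import all_classical all_reals all_analysis.
Import Order.TTheory GRing.Theory Num.Theory.
Set Implicit Arguments. Unset Strict Implicit.
From mathcomp Require Import ring lra.
Local Open Scope ring_scope.

Lemma der_lin (R : realType) (c x : R) : is_derive x 1 (fun t : R => t * c) c.
Proof.
have H := @is_deriveM R R id (cst c) x 1 1 0 (is_derive_id _ _) (is_derive_cst _ _ _).
rewrite scaler0 add0r in H.
apply: (is_derive_eq H). by rewrite /GRing.scale /= mulr1.
Qed.

Lemma der_S (R : realType) (a b c x : R) :
  is_derive x 1 (fun t : R => a + b * expR (t * c)) (b * (expR (x * c) * c)).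
Proof.
have H1 : is_derive x 1 (expR \o (fun t : R => t * c)) (expR (x * c) * c).
  apply: is_derive1_comp. exact: der_lin.
have H2 := is_deriveZ b H1.
have H3 := is_deriveD (is_derive_cst a x 1) H2.
apply: (is_derive_eq H3). by rewrite add0r.
Qed.

Definition Sf (R : realType) (a b c : R) (x : R) := a + b * expR (x * c).
Definition Qf (R : realType) (b c : R) (x : R) := b * (expR (x * c) * c).
Definition F1 (R : realType) (a b c th : R) (x : R) :=
  if b == 0 then 0 else th * (Sf a b c x `^ (th - 1) * Qf b c x).
Definition F2 (R : realType) (a b c th : R) (x : R) :=
  if b == 0 then 0 else
  th * (Sf a b c x `^ (th - 1) * (Qf b c x * c)
        + Qf b c x * ((th - 1) * Sf a b c x `^ (th - 1 - 1) * Qf b c x)).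

Lemma Sf_gt0 (R : realType) (a b c x : R) : 0 <= a -> 0 < b -> 0 < Sf a b c x.
Proof. by move=> ha hb; rewrite /Sf ltr_wpDl // mulr_gt0 // expR_gt0. Qed.

Lemma der_Q (R : realType) (b c x : R) : is_derive x 1 (Qf b c) (Qf b c x * c).
Proof.
have H1 : is_derive x 1 (expR \o (fun t : R => t * c)) (expR (x * c) * c).
  apply: is_derive1_comp. exact: der_lin.
have H2 := is_deriveM H1 (is_derive_cst c x 1).
have H3 := is_deriveZ b H2.
apply: (is_derive_eq H3). rewrite /Qf /cst /GRing.scale /=. ring.
Qed.

Lemma der_F (R : realType) (a b c th x : R) : 0 <= a -> 0 <= b ->
  is_derive x 1 (fun t => Sf a b c t `^ th) (F1 a b c th x).
Proof.
move=> ha hb; rewrite /F1; have [->|b0] := eqVneq b 0.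
  have -> : (fun t => Sf a 0 c t `^ th) = cst (a `^ th).
    by apply/funext => t; rewrite /Sf mul0r addr0.
  exact: is_derive_cst.
have bp : 0 < b by rewrite lt_neqAle eq_sym b0.
have H1 := @is_derive1_powR R th _ (Sf_gt0 c x ha bp).
have H2 := is_derive1_comp H1 (der_S a b c x).
apply: (is_derive_eq H2). rewrite /Qf. ring.
Qed.

Lemma der_F1 (R : realType) (a b c th x : R) : 0 <= a -> 0 <= b ->
  is_derive x 1 (F1 a b c th) (F2 a b c th x).
Proof.
move=> ha hb; rewrite /F1 /F2; case: eqP => [_|/eqP b0].
  exact: is_derive_cst.
have bp : 0 < b by rewrite lt_neqAle eq_sym b0.
have H1 := @is_derive1_powR R (th - 1) _ (Sf_gt0 c x ha bp).
have H2 := is_derive1_comp H1 (der_S a b c x).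
have H3 := is_deriveM H2 (der_Q b c x).
have H4 := is_deriveZ th H3.
apply: (is_derive_eq H4). rewrite /Qf /GRing.scale /=. ring.
Qed.

Lemma F1_ge0 (R : realType) (a b c th x : R) : 0 <= b -> 0 <= c -> 0 <= th ->
  0 <= F1 a b c th x.
Proof.
move=> hb hc ht; rewrite /F1; case: ifP => // _.
by rewrite mulr_ge0 // mulr_ge0 ?powR_ge0 // /Qf mulr_ge0 // mulr_ge0 // expR_ge0.
Qed.

Lemma F2_le (R : realType) (a b c th x : R) : 0 <= b -> 0 <= c -> 0 <= th -> th <= 1 ->
  F2 a b c th x <= c * F1 a b c th x.
Proof.
move=> hb hc ht ht1; rewrite /F1 /F2; case: ifP => _; first by rewrite mulr0.
set P := _ `^ (th - 1); set P2 := _ `^ (th - 1 - 1); set Q := Qf b c x.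
have hP2 : 0 <= P2 by apply: powR_ge0.
rewrite -subr_ge0.
have -> : c * (th * (P * Q)) - th * (P * (Q * c) + Q * ((th - 1) * P2 * Q))
  = th * (1 - th) * P2 * (Q * Q) by ring.
by rewrite !mulr_ge0 // ?subr_ge0 // -expr2 sqr_ge0.
Qed.

Lemma der_sum (R : realType) (L : finType) (f : L -> R -> R) (df : L -> R) (x : R) :
  (forall l, is_derive x 1 (f l) (df l)) ->
  is_derive x 1 (fun t => \sum_l f l t) (\sum_l df l).
Proof.
move=> H; rewrite -fct_sumE.
by elim/big_ind2 : _ => // [|] *; [exact: is_derive_cst|exact: is_deriveD].
Qed.

Definition Aa (R : realType) (n : nat) (L : finType) (mul : L -> R)
  (sigma : 'I_n -> L -> R) (U : 'I_n -> R) (i : 'I_n) (l : L) : R :=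
  \sum_(j < n | j != i) (sigma j l * expR (U j)) `^ (mul l)^-1.
Definition Bb (R : realType) (n : nat) (L : finType) (mul : L -> R)
  (sigma : 'I_n -> L -> R) (U : 'I_n -> R) (i : 'I_n) (l : L) : R :=
  (sigma i l * expR (U i)) `^ (mul l)^-1.

Lemma key (R : realType) (n : nat) (L : finType) (mu : R) (mul : L -> R)
  (sigma : 'I_n -> L -> R) (hsig0 : forall i l, 0 <= sigma i l)
  (U : 'I_n -> R) (i : 'I_n) (t : R) :
  surplus mu mul sigma (fun j => U j + (if j == i then t else 0)) =
  mu * ln (\sum_(l : L) Sf (Aa mul sigma U i l) (Bb mul sigma U i l) (mul l)^-1 t `^ (mul l / mu)).
Proof.
rewrite /surplus /GNL /Sf; congr (_ * ln _); apply: eq_bigr => l _; congr (_ `^ _).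
rewrite (bigD1 i) //= eqxx addrC /Aa /Bb; congr (_ + _).
  by apply: eq_bigr => j /negPf ->; rewrite addr0.
rewrite expRD mulrA powRM ?mulr_ge0 ?expR_ge0 //; congr (_ * _).
by rewrite -expRM.
Qed.

Theorem theorem3 (R : realType) (n : nat) (L : finType) (mu : R) (mul : L -> R)
  (sigma : 'I_n -> L -> R)
  (hmu : 0 < mu)
  (hmul : forall l, 0 < mul l /\ mul l <= mu)
  (hsig0 : forall i l, 0 <= sigma i l)
  (hsig1 : forall i, \sum_(l : L) sigma i l = 1)
  (U : 'I_n -> R) (hU : forall j, U j < 0) (i : 'I_n) :
  partial i (partial i (surplus mu mul sigma)) U
    <= (min_mu mu mul)^-1 * partial i (surplus mu mul sigma) U.
Proof.
set a := fun l => Aa mul sigma U i l.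
set b := fun l => Bb mul sigma U i l.
set c := fun l => (mul l)^-1.
set th := fun l => mul l / mu.
have ha : forall l, 0 <= a l.
  by move=> l; rewrite /a /Aa sumr_ge0 // => j _; exact: powR_ge0.
have hb : forall l, 0 <= b l by move=> l; exact: powR_ge0.
have hc : forall l, 0 <= c l by move=> l; rewrite /c invr_ge0 ltW //; case: (hmul l).
have hth : forall l, 0 <= th l by move=> l; rewrite /th divr_ge0 // ltW //; case: (hmul l).
have hth1 : forall l, th l <= 1.
  by move=> l; rewrite /th ler_pdivrMr // mul1r; case: (hmul l).
set h := fun x => \sum_l Sf (a l) (b l) (c l) x `^ th l.
set h1 := fun x => \sum_l F1 (a l) (b l) (c l) (th l) x.
set h2 := fun x => \sum_l F2 (a l) (b l) (c l) (th l) x.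
have [l0 hl0] : exists l, 0 < sigma i l.
  case: (boolP [exists l, 0 < sigma i l]) => [/existsP [l hl]|/existsPn H].
    by exists l.
  have : \sum_l sigma i l = 0.
    apply: big1 => l _; apply/eqP; rewrite eq_le hsig0 andbT.
    by move: (H l); rewrite -leNgt.
  by rewrite hsig1 => /eqP; rewrite oner_eq0.
have hbl0 : 0 < b l0 by rewrite /b /Bb powR_gt0 // mulr_gt0 // expR_gt0.
have hpos : forall x, 0 < h x.
  move=> x; rewrite /h (bigD1 l0) //=.
  apply: (@lt_le_trans _ _ (Sf (a l0) (b l0) (c l0) x `^ th l0)).
    by rewrite powR_gt0 // Sf_gt0.
  by rewrite lerDl sumr_ge0 // => l _; exact: powR_ge0.
have dh : forall x : R, is_derive x 1 h (h1 x).
  by move=> x; apply: der_sum => l; exact: der_F.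
have dh1 : forall x : R, is_derive x 1 h1 (h2 x).
  by move=> x; apply: der_sum => l; exact: der_F1.
set G := fun x => mu * ln (h x).
set G1 := fun x => mu * ((h x)^-1 * h1 x).
set G2 := fun x => mu * ((h x)^-1 * h2 x + h1 x * (- (h x) ^- 2 * h1 x)).
have dG : forall x : R, is_derive x 1 G (G1 x).
  move=> x.
  have H1 := is_derive1_comp (is_derive1_ln (hpos x)) (dh x).
  have H2 := is_deriveZ mu H1.
  exact: (is_derive_eq H2).
have dG1 : forall x : R, is_derive x 1 G1 (G2 x).
  move=> x.
  have H1 := is_deriveV (lt0r_neq0 (hpos x)) (dh x).
  have H2 := is_deriveM H1 (dh1 x).
  have H3 := is_deriveZ mu H2.
  apply: (is_derive_eq H3); rewrite /G2 /GRing.scale /=; ring.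
have hk : forall t, surplus mu mul sigma (fun j => U j + (if j == i then t else 0)) = G t.
  by move=> t; rewrite key.
have hs : forall t, partial i (surplus mu mul sigma) (fun j => U j + (if j == i then t else 0)) = G1 t.
  move=> t; rewrite /partial.
  have -> : (fun s => surplus mu mul sigma (fun j => (U j + (if j == i then t else 0)) + (if j == i then s else 0))) = G \o shift t.
    apply/funext => s /=; rewrite -hk; congr surplus; apply/funext => j.
    by case: (j == i); rewrite ?addr0 // -addrA (addrC t).
  have H := is_derive1_comp (dG (shift t 0)) (is_derive_shift 0 1 t).
  rewrite derive1E; case: H => _ ->; by rewrite /= add0r mulr1.
change (derive1 (fun t => partial i (surplus mu mul sigma) (fun j => U j + (if j == i then t else 0))) 0
   <= (min_mu mu mul)^-1 * derive1 (fun t => surplus mu mul sigma (fun j => U j + (if j == i then t else 0))) 0).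
rewrite (_ : (fun t => _) = G1); last by apply/funext => t; exact: hs.
rewrite (_ : (fun t => _) = G); last by apply/funext => t; exact: hk.
rewrite !derive1E; case: (dG1 0) => _ ->; case: (dG 0) => _ ->.
set m := min_mu mu mul.
have hm : 0 < m by apply: lt_bigmin => // l _; case: (hmul l).
have hml : forall l, m <= mul l by move=> l; exact: bigmin_le.
have hh1 : 0 <= h1 0 by rewrite /h1 sumr_ge0 // => l _; exact: F1_ge0.
have hh2 : h2 0 <= m^-1 * h1 0.
  rewrite /h2 /h1 mulr_sumr; apply: ler_sum => l _.
  apply: (le_trans (F2_le _ _ _ _ _ _)) => //.
  apply: ler_wpM2r; first exact: F1_ge0.
  rewrite /c lef_pV2 ?posrE //; case: (hmul l) => //.
have hp := hpos 0.
rewrite /G1 /G2.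
set H := h 0 in hp *; set X := h1 0 in hh1 hh2 *; set Y := h2 0 in hh2 *.
have hHi : 0 < H^-1 by rewrite invr_gt0.
have : H^-1 * Y <= H^-1 * (m^-1 * X) by rewrite ler_pM2l.
have : 0 <= X * (H ^- 2 * X) by rewrite mulr_ge0 // mulr_ge0 // invr_ge0 exprn_ge0 // ltW.
move=> h3 h4.
rewrite [X in _ <= X]mulrCA ler_pM2l // mulNr mulrN.
rewrite mulrCA in h4.
lra.
Qed.
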